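(* Let $G$ be a finite group, $s \in G^{\#}$ and $c$ a positive integer. Let $\{x_1,\ldots,x_k\}$ be a set of representatives of the conjugacy classes of elements of prime order in $G$. Then \[ Q(G,s,c) \leqslant \sum_{i=1}^{k} |x_i^G| \left( \sum_{H \in \mathcal{M}(G,s)} {\rm fpr}(x_i,G/H) \right)^c. \]
   Context: $G^{\#}$ is the set of non-identity elements of $G$. A subset $S\subseteq G^{\#}$ is a total dominating set for the generating graph of $G$ if for every $g\in G^{\#}$ there exists $z\in S$ with $G=\langle g,z\rangle$. $Q(G,s,c)$ is the probability that for a uniformly random $c$-tuple $(z_1,\ldots,z_c)$ of conjugates of $s$, the set $\{z_1,\ldots,z_c\}$ is not a total dominating set. $\mathcal{M}(G,s)$ is the set of maximal subgroups of $G$ containing $s$. For $x\in G$ and $H<G$, ${\rm fpr}(x,G/H)=|x^G\cap H|/|x^G|$ (the fixed point ratio of $x$ on $G/H$). *)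

(* Defs.v *)
From HB Require Import structures.
From mathcomp Require Import all_boot all_order all_algebra all_fingroup all_solvable.
Set Implicit Arguments. Unset Strict Implicit. Unset Printing Implicit Defensive.
Import GRing.Theory Num.Theory.
Local Open Scope group_scope.

Definition total_dominating {gT : finGroupType} (G : {group gT}) (S : {set gT}) : bool :=
  (S \subset G^#) &&
  [forall g in G^#, [exists z in S, <<[set g; z]>> == G :> {set gT}]].

Definition Qprob {gT : finGroupType} (G : {group gT}) (s : gT) (c : nat) : rat :=
  (#|[set t : c.-tuple gT | all (fun z => z \in s ^: G) t
        && ~~ total_dominating G [set z in t]]|%:R
   / (#|s ^: G| ^ c)%:R)%R.

Definition maxsub_containing {gT : finGroupType} (G : {group gT}) (s : gT)
  (H : {group gT}) : bool := maximal H G && (s \in H).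

Definition fpr {gT : finGroupType} (G H : {group gT}) (x : gT) : rat :=
  (#|(x ^: G) :&: H|%:R / #|x ^: G|%:R)%R.

Definition prime_order_class_reps {gT : finGroupType} (G : {group gT}) (X : {set gT}) : Prop :=
  [/\ X \subset G,
      (forall x, x \in X -> prime #[x]),
      (forall y, y \in G -> prime #[y] -> exists2 x, x \in X & y \in x ^: G) &
      (forall x1 x2, x1 \in X -> x2 \in X -> x1 \in x2 ^: G -> x1 = x2)].

(* Main.v *)
Require Import Defs.
From HB Require Import structures.
From mathcomp Require Import all_boot all_order all_algebra all_fingroup all_solvable.
From mathcomp Require Import ring zify.
Import GRing.Theory Num.Theory.
Set Implicit Arguments. Unset Strict Implicit. Unset Printing Implicit Defensive.

Section Gen.
Local Open Scope group_scope.

Lemma conj_fix_cent (gT : finGroupType) (x y : gT) : (x ^ y == x) = (y \in 'C[x]).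
Proof.
apply/eqP/cent1P => [h | h].
  by rewrite /commute [x * y]conjgC h.
by rewrite conjgE -h mulKg.
Qed.

Lemma fiber_card (gT : finGroupType) (G : {group gT}) (x : gT) (P : pred gT) :
  x \in G ->
  #|[set g in G | P (x ^ g)]| = (#|'C_G[x]| * #|[set z in x ^: G | P z]|)%N.
Proof.
move=> xG.
rewrite -sum1_card (partition_big (fun g => x ^ g) (mem [set z in x ^: G | P z])); last first.
  by move=> g; rewrite !inE => /andP[gG Pg]; rewrite memJ_class.
rewrite mulnC -sum_nat_const.
apply: eq_bigr => z; rewrite !inE => /andP[/imsetP[h hG ->{z}]]; rewrite -/(x ^ h) => Pz.
rewrite -(card_rcoset _ h) -sum1_card; apply: eq_bigl => g.

rewrite !inE mem_rcoset in_setI groupMr ?groupV //.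
rewrite -conj_fix_cent conjgM (can2_eq (conjgKV h) (conjgK h)).
case: (boolP (g \in G)) => //= gG.
by case: eqP => [-> | _]; rewrite ?andbT ?andbF.
Qed.

End Gen.

Lemma union_bound (T I : finType) (A : {pred T}) (P : pred I) (R : I -> pred T) :
  (forall t, t \in A -> exists2 i, P i & R i t) ->
  #|A| <= \sum_(i | P i) #|[set t | R i t]|.
Proof.
move=> cov.
rewrite -sum1_card.
apply: (@leq_trans (\sum_(t in A) \sum_(i | P i) (R i t : nat))).
  apply: leq_sum => t /cov [i Pi Rit].
  by rewrite (bigD1 i) //= Rit.
rewrite exchange_big /=; apply: leq_sum => i _.
rewrite -sum1_card big_mkcond /= [X in _ <= X]big_mkcond /=.
apply: leq_sum => t _; rewrite inE.
by case: (t \in A); case: (R i t).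
Qed.

Lemma card_all_tuple (T : finType) (A : {set T}) n :
  #|[set t : n.-tuple T | all (mem A) t]| = #|A| ^ n.
Proof.
elim: n => [|n IH].
  rewrite expn0; have := card_tuple 0 T; rewrite expn0 => <-.
  apply: eq_card => t; rewrite inE.
  by rewrite tuple0.
have -> : [set t : n.+1.-tuple T | all (mem A) t] =
   [set [tuple of p.1 :: (p.2 : n.-tuple T)] | p in setX A [set t : n.-tuple T | all (mem A) t]].
  apply/setP => t; rewrite inE; apply/idP/imsetP.
    rewrite [t]tuple_eta /= => /andP[h1 h2].
    exists (thead t, [tuple of behead t]) => //.
    by rewrite !inE h1.
  case=> [[x u]]; rewrite !inE /= => /andP[xA uA] ->.
  by rewrite /= xA.
rewrite card_imset ?cardsX ?IH ?expnS //.
by move=> [x u] [y v] /(congr1 val) /= [-> /val_inj ->].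
Qed.


Section Helpers.
Local Open Scope group_scope.
Variable gT : finGroupType.
Implicit Types (G H : {group gT}) (x y s z g : gT).

Definition Aset G s y : {set gT} :=
  [set z in s ^: G | [exists H : {group gT}, [&& maximal H G, z \in H & y \in H]]].
Definition Pset G : {set gT} := [set y in G | prime #[y]].

Lemma step1 G s c : s \in G^# ->
  #|[set t : c.-tuple gT | all (fun z => z \in s ^: G) t
        && ~~ total_dominating G [set z in t]]|
  <= \sum_(y in Pset G) #|Aset G s y| ^ c.
Proof.
move=> sG1; move: (sG1); rewrite !inE => /andP[s1 sG].
have -> : \sum_(y in Pset G) #|Aset G s y| ^ c =
          \sum_(y in Pset G) #|[set t : c.-tuple gT | all (mem (Aset G s y)) t]|.
  by apply: eq_bigr => y _; rewrite card_all_tuple.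
apply: union_bound => t; rewrite inE => /andP[allt ntd].
have sub : [set z in t] \subset G^#.
  apply/subsetP => z; rewrite inE => zt.
  move/allP: allt => /(_ z zt) /imsetP [h hG ->].
  by rewrite !inE conjg_eq1 s1 groupJ.
move: ntd; rewrite /total_dominating sub /= => /forallPn [g].
rewrite negb_imply => /andP[gG1 ngen].
move: (gG1); rewrite !inE => /andP[g1 gG].
have g1' : 1 < #[g] by rewrite order_gt1.
have [y yg oy] := Cauchy (pdiv_prime g1') (pdiv_dvd #[g]).
have yG : y \in G by apply: (subsetP _ _ yg); rewrite cycle_subG.
exists y; first by rewrite inE yG oy pdiv_prime.
apply/allP => z zt; rewrite /Aset !inE.
have zsG : z \in s ^: G by move/allP: allt; apply.
rewrite zsG /=.
have zG : z \in G by move: zsG => /imsetP [h hG ->]; rewrite groupJ.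
have nz : <<[set g; z]>> != G.
  by move/existsPn: ngen => /(_ z); rewrite inE zt.
have sKG : <<[set g; z]>>%G \subset G.
  by rewrite gen_subG; apply/subsetP => w; rewrite !inE => /orP[/eqP->|/eqP->].
case: (maximal_exists sKG) => [eKG | [M maxM sKM]].
  by rewrite eKG eqxx in nz.
apply/existsP; exists M; rewrite maxM /=.
apply/andP; split.
  by apply: (subsetP sKM); apply: mem_gen; rewrite !inE eqxx orbT.
apply: (subsetP sKM); move: yg; apply: (subsetP).
by rewrite cycle_subG; apply: mem_gen; rewrite !inE eqxx.
Qed.

Lemma step2 G s y : s \in G -> y \in G ->
  #|'C_G[s]| * #|Aset G s y| <=
  #|'C_G[y]| * \sum_(H : {group gT} | maxsub_containing G s H) #|y ^: G :&: H|.
Proof.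
move=> sG yG.
have eA : [set z in s ^: G | z \in Aset G s y] = Aset G s y.
  by apply/setP => z; rewrite /Aset !inE andbA andbb.
rewrite -eA -(fiber_card (mem (Aset G s y)) sG) big_distrr /=.
have -> : \sum_(H : {group gT} | maxsub_containing G s H) #|'C_G[y]| * #|y ^: G :&: H|
   = \sum_(H : {group gT} | maxsub_containing G s H) #|[set g | (g \in G) && ((y ^ g^-1)%g \in H)]|.
  apply: eq_bigr => H _.
  have -> : y ^: G :&: H = [set z in y ^: G | z \in H] by apply/setP => z; rewrite !inE.
  rewrite -(fiber_card (mem H) yG) -(card_preimset _ (@invg_inj gT)).
  by apply: eq_card => g; rewrite !inE groupV.
apply: union_bound => g; rewrite !inE => /andP[gG].
case/andP=> _ /existsP[M /and3P[maxM sgM yM]].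
exists (M :^ g^-1)%G.
  rewrite /maxsub_containing /= mem_conjgV sgM andbT.
  have eG : G :^ g^-1 = G by apply: conjGid; rewrite groupV.
  by rewrite -eG maximalJ.
by rewrite gG memJ_conjg.
Qed.

Lemma class_card_gt0 G x : 0 < #|x ^: G|.
Proof. by apply/card_gt0P; exists x; apply: class_refl. Qed.

Lemma cardG_class G x : x \in G -> (#|'C_G[x]| * #|x ^: G| = #|G|)%N.
Proof. by move=> xG; rewrite -index_cent1 Lagrange // subsetIl. Qed.

Lemma ratle a n b m : 0 < n -> 0 < m -> (a * m <= b * n)%N ->
  (a%:R / n%:R <= b%:R / m%:R :> rat)%R.
Proof.
move=> n0 m0 h.
rewrite ler_pdivrMr ?ltr0n // mulrAC ler_pdivlMr ?ltr0n //.
by rewrite -!natrM ler_nat.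
Qed.

Lemma step3 G s y : s \in G -> y \in G ->
  (#|Aset G s y|%:R / #|s ^: G|%:R <=
     \sum_(H : {group gT} | maxsub_containing G s H) fpr G H y :> rat)%R.
Proof.
move=> sG yG.
rewrite /fpr -mulr_suml -natr_sum.
apply: ratle; rewrite ?class_card_gt0 //.
have h := step2 sG yG.
have eS := cardG_class sG; have eY := cardG_class yG.
have kS := cardG_gt0 [group of 'C_G[s]]; have kY := cardG_gt0 [group of 'C_G[y]].
set a := #|Aset G s y| in h *; set b := \sum_(H | _) _ in h *.
set n := #|s ^: G| in eS *; set m := #|y ^: G| in eY *.
set k1 := #|'C_G[s]| in h eS kS *; set k2 := #|'C_G[y]| in h eY kY *.
rewrite -(@leq_pmul2r (k1 * k2)%N); last by rewrite muln_gt0 kS kY.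
have -> : (a * m * (k1 * k2) = (k1 * a) * (k2 * m))%N by ring.
have -> : (b * n * (k1 * k2) = (k2 * b) * (k1 * n))%N by ring.
by rewrite eY -eS leq_mul2r h orbT.
Qed.

End Helpers.

Theorem lemma2p5 (gT : finGroupType) (G : {group gT}) (s : gT) (c : nat)
  (X : {set gT}) :
  s \in G^#%g -> (0 < c)%N -> prime_order_class_reps G X ->
  (Qprob G s c <=
   \sum_(x in X) #|(x ^: G)%g|%:R *
     (\sum_(H : {group gT} | maxsub_containing G s H) fpr G H x) ^+ c)%R.
Proof.
move=> sG1 _ [XG Xpr Xcov Xuniq].
have sG : s \in G by move: sG1; rewrite !inE => /andP[].
pose f y := (\sum_(H : {group gT} | maxsub_containing G s H) fpr G H y)%R.
have f0 y : (0 <= f y)%R.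
  by apply: sumr_ge0 => H _; rewrite /fpr divr_ge0 ?ler0n.
have Q1 : (Qprob G s c <= \sum_(y in Pset G) f y ^+ c)%R.
  rewrite /Qprob.
  have Q2 : (#|[set t : c.-tuple gT | all (fun z => z \in (s ^: G)%g) t
        && ~~ total_dominating G [set z in t]]|%:R / (#|(s ^: G)%g| ^ c)%N%:R <=
     (\sum_(y in Pset G) #|Aset G s y| ^ c)%N%:R / (#|(s ^: G)%g| ^ c)%N%:R :> rat)%R.
    rewrite ler_pM2r ?invr_gt0 ?ltr0n ?expn_gt0 ?class_card_gt0 // ler_nat.
    exact: step1.
  apply: (Order.le_trans Q2).
  rewrite natr_sum mulr_suml; apply: ler_sum => y; rewrite inE => /andP[yG _].
  rewrite !natrX -expr_div_n; apply: lerXn2r; rewrite ?nnegrE ?divr_ge0 ?ler0n //.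
  exact: step3.
apply: (Order.le_trans Q1).
rewrite (partition_big (fun y => odflt 1%g [pick x in X | y \in (x ^: G)%g]) (mem X)); last first.
  move=> y; rewrite inE => /andP[yG py]; case: pickP => [x /andP[]|] //= none.
  have [x xX yx] := Xcov y yG py.
  by have := none x; rewrite xX yx.
apply: ler_sum => x xX.
rewrite Order.POrderTheory.le_eqVlt; apply/orP; left; apply/eqP.
have xG := subsetP XG x xX.
rewrite (eq_bigl (mem (x ^: G)%g)); last first.
  move=> y; rewrite /=.
  case: (boolP (y \in (x ^: G)%g)) => yx.
    have yG : y \in G by move: yx => /imsetP[h hG ->]; rewrite groupJ.
    have yP : y \in Pset G.
      by rewrite inE yG; move: yx => /imsetP[h hG ->]; rewrite orderJ Xpr.
    rewrite yP /=; case: pickP => [x' /andP[x'X yx'] | none] /=.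
      apply/eqP; apply: Xuniq => //.
      by apply: class_trans yx; rewrite class_sym.
    by have := none x; rewrite xX yx.
  apply/negP => /andP[yP]; rewrite inE in yP; case/andP: yP => yG py.
  case: pickP => [x' /andP[_ yx'] /= /eqP e | none /= /eqP e].
    by rewrite -e yx' in yx.
  have [x'' x''X yx''] := Xcov y yG py.
  by have := none x''; rewrite x''X yx''.
rewrite (eq_bigr (fun _ => f x ^+ c)%R); last first.
  move=> y yx; rewrite /f.
  by rewrite /fpr (class_eqP yx).
by rewrite sumr_const mulr_natl.
Qed.
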